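(* Let $D$ be a torus invariant Weil divisor on the cyclic quotient singularity $X$, and let $u^0,\dots,u^r$ be the elements of $G(D)$, ordered so that $\langle u^0,\rho^0\rangle<\langle u^1,\rho^0\rangle<\dots<\langle u^r,\rho^0\rangle$. Let $\pi:\bigoplus_{i=0}^r R[-u^i]\to\Gamma(D)$ be the map $e^i\mapsto x^{u^i}$, and let \[ \iota:\bigoplus_{i=1}^r \big((x^{u^{i-1}})\cap(x^{u^i})\big)\to\bigoplus_{i=0}^r R[-u^i] \] be the map which on the $i$-th summand sends $x^u\mapsto x^{u-u^i}e^i-x^{u-u^{i-1}}e^{i-1}$. Then the sequence \[ 0\to\bigoplus_{i=1}^r\big((x^{u^{i-1}})\cap(x^{u^i})\big)\xrightarrow{\iota}\bigoplus_{i=0}^rR[-u^i]\xrightarrow{\pi}\Gamma(D)\to 0 \] is exact. Furthermore, each fractional ideal $(x^{u^{i-1}})\cap(x^{u^i})$ is divisorial, i.e. equal to $\Gamma(W)$ for some torus invariant Weil divisor $W$.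
   Context: Fix coprime integers $0<q<n$. Let $M=\mathbb Z^2$, $M_{\mathbb Q}=\mathbb Q^2$, with the standard scalar product $\langle\cdot,\cdot\rangle$. Put $\rho^0=(1,0)$, $\rho^1=(-q,n)$, $\sigma^\vee=\{u\in M_{\mathbb Q}:\langle u,\rho^0\rangle\ge 0,\ \langle u,\rho^1\rangle\ge 0\}$, $R=\mathbb C[\sigma^\vee\cap M]$ (monomials $x^u$), $X=\mathrm{Spec}\,R$. A torus invariant Weil divisor is $D=a_0[\rho^0]+a_1[\rho^1]$, $a_i\in\mathbb Z$, with section polyhedron $P_D=\{u\in M_{\mathbb Q}:\langle u,\rho^i\rangle\ge -a_i,\ i=0,1\}$ and global sections $\Gamma(D)=\bigoplus_{u\in P_D\cap M}\mathbb C\,x^u\subseteq\mathbb C[M]$, an $M$-graded $R$-module. $G(D)$ denotes the set of lattice points $u\in M$ lying on a compact edge of the convex hull $\mathrm{conv}(P_D\cap M)$ (these are the minimal homogeneous generators of $\Gamma(D)$). For $u\in M$, $R[-u]$ is the free $M$-graded $R$-module of rank one with basis element $e$ in degree $u$, and $(x^u)=x^uR\subseteq\mathbb C[M]$ is the principal fractional ideal. *)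

(* Defs.v *)
From mathcomp Require Import all_boot all_order all_algebra.
From mathcomp Require Import Rstruct complex.
Set Implicit Arguments. Unset Strict Implicit. Unset Printing Implicit Defensive.
Import Order.TTheory GRing.Theory Num.Theory.
Local Open Scope ring_scope.

Definition C : fieldType := complex.complex Rdefinitions.R.

Definition M := (int * int)%type.

Definition dot (u v : M) : int := u.1 * v.1 + u.2 * v.2.
Definition addM (u v : M) : M := (u.1 + v.1, u.2 + v.2).
Definition subM (u v : M) : M := (u.1 - v.1, u.2 - v.2).

Definition rho0 : M := (1, 0).
Definition rho1 (n q : nat) : M := (- (q%:Z), n%:Z).

Definition in_sigma_dual (n q : nat) (u : M) : bool :=
  (0 <= dot u rho0) && (0 <= dot u (rho1 n q)).

(* lattice points of the section polyhedron P_D, D = a0 [rho^0] + a1 [rho^1] *)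
Definition in_PD (n q : nat) (a0 a1 : int) (u : M) : bool :=
  (- a0 <= dot u rho0) && (- a1 <= dot u (rho1 n q)).

(* Elements of C[M] (Laurent polynomials) are represented by their
   coefficient functions M -> K with finite support; x^u is the indicator of u. *)
Definition fin_supp (K : fieldType) (f : M -> K) : Prop :=
  exists s : seq M, forall m, f m != 0 -> m \in s.

Definition supp_in (K : fieldType) (f : M -> K) (P : M -> bool) : Prop :=
  forall m, f m != 0 -> P m.

Definition in_R (K : fieldType) (n q : nat) (f : M -> K) : Prop :=
  fin_supp f /\ supp_in f (in_sigma_dual n q).

Definition in_Gamma (K : fieldType) (n q : nat) (a0 a1 : int) (f : M -> K) : Prop :=
  fin_supp f /\ supp_in f (in_PD n q a0 a1).

Definition in_principal (K : fieldType) (n q : nat) (u : M) (f : M -> K) : Prop :=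
  fin_supp f /\ supp_in f (fun m => in_sigma_dual n q (subM m u)).

(* multiplication by the monomial x^u *)
Definition shift (K : fieldType) (u : M) (f : M -> K) : M -> K :=
  fun m => f (subM m u).

(* G(D): lattice points on the compact faces of conv(P_D \cap M), i.e.
   lattice points of P_D minimizing some linear functional w = a rho^0 + b rho^1
   with a, b > 0 (w in the interior of sigma) over P_D \cap M. *)
Definition in_G (n q : nat) (a0 a1 : int) (u : M) : Prop :=
  in_PD n q a0 a1 u /\
  exists a b : rat, 0 < a /\ 0 < b /\
    forall v : M, in_PD n q a0 a1 v ->
      a * (dot u rho0)%:~R + b * (dot u (rho1 n q))%:~R
      <= a * (dot v rho0)%:~R + b * (dot v (rho1 n q))%:~R.

(* An element of the direct sum (+)_{i=0}^r R[-u^i] is a family g of elements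
   of R, g i being the coefficient of the basis element e^i (degree u^i). *)
Definition in_free_sum (K : fieldType) (n q r : nat) (g : nat -> M -> K) : Prop :=
  forall i, (i <= r)%N -> in_R n q (g i).

Definition in_ideal_sum (K : fieldType) (n q r : nat) (u : nat -> M)
    (f : nat -> M -> K) : Prop :=
  forall i, (1 <= i <= r)%N ->
    in_principal n q (u i.-1) (f i) /\ in_principal n q (u i) (f i).

Definition pi_map (K : fieldType) (r : nat) (u : nat -> M) (g : nat -> M -> K) : M -> K :=
  fun m => \sum_(i < r.+1) shift (u i) (g i) m.

(* iota : on the i-th summand, x^w |-> x^{w-u^i} e^i - x^{w-u^{i-1}} e^{i-1};
   component j of iota f collects +x^{-u^j} f_j (if 1<=j<=r) and
   -x^{-u^j} f_{j+1} (if j+1 <= r). *)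
Definition iota_map (K : fieldType) (r : nat) (u : nat -> M) (f : nat -> M -> K)
    : nat -> M -> K :=
  fun j m =>
    (if (1 <= j <= r)%N then shift (subM (0,0) (u j)) (f j) m else 0)
    - (if (j.+1 <= r)%N then shift (subM (0,0) (u j)) (f j.+1) m else 0).

(* Main.v *)
Require Import Defs.
From mathcomp Require Import all_boot all_order all_algebra.
From mathcomp Require Import Rstruct complex.
From mathcomp Require Import zify ring lra.
From Stdlib Require Import Classical.
Import Order.TTheory GRing.Theory Num.Theory.
Local Open Scope ring_scope.
Set Implicit Arguments. Unset Strict Implicit.

Lemma min_exists (P : M -> Prop) (f : M -> int) (lb : int) :
  (forall x, P x -> lb <= f x) -> (exists x, P x) ->
  exists x, P x /\ forall y, P y -> f x <= f y.
Proof.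
move=> Hlb [x0 Px0].
suff H : forall k : nat, forall x, P x -> f x - lb <= k%:Z ->
  exists x, P x /\ forall y, P y -> f x <= f y.
  have := Hlb _ Px0; move=> h.
  apply: (H `|f x0 - lb|%N x0 Px0); lia.
elim=> [|k IH] x Px Hk.
  exists x; split=> // y Py; have := Hlb _ Py; lia.
case: (classic (exists y, P y /\ f y < f x)) => [[y [Py Hy]]|Hn].
  apply: (IH y Py); have := Hlb _ Py; lia.
exists x; split=> // y Py; case: (lerP (f x) (f y)) => // h.
by exfalso; apply: Hn; exists y.
Qed.

Section Geo.
Variables (n q : nat) (a0 a1 : int).
Hypothesis n_gt0 : (0 < n)%N.

Definition A (x : M) : int := x.1.
Definition B (x : M) : int := n%:Z * x.2 - q%:Z * x.1.
Definition inP (x : M) := (- a0 <= A x) && (- a1 <= B x).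
Definition Pareto (v : M) := inP v /\
  forall x, inP x -> A x <= A v -> B x <= B v -> x = v.

Lemma eqAB x y : A x = A y -> B x = B y -> x = y.
Proof.
case: x y => [x1 x2] [y1 y2]; rewrite /A /B /= => e1 e2; subst.
have : n%:Z * x2 = n%:Z * y2 by move: e2; lia.
have nz : n%:Z != 0 by lia.
by move/(mulfI nz) => ->.
Qed.

Definition zz (x y v : M) : M := subM (addM x y) v.
Lemma A_zz x y v : A (zz x y v) = A x + A y - A v. Proof. by []. Qed.
Lemma B_zz x y v : B (zz x y v) = B x + B y - B v.
Proof. rewrite /B /zz /subM /addM /=; ring. Qed.

Lemma Pareto_left v x : Pareto v -> inP x -> A x < A v -> B v < B x.
Proof.
move=> [_ Pv] Px h; case: (ltrP (B v) (B x)) => // h2.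
have e := Pv x Px (ltW h) h2; subst; lia.
Qed.

Lemma eq_ler (a b : int) : a = b -> a <= b. Proof. by move=>->. Qed.

Lemma SL v : Pareto v -> forall x y, inP x -> inP y -> A x < A v -> A v < A y ->
  (B v - B y) * (A v - A x) <= (B x - B v) * (A y - A v).
Proof.
move=> Pv x y Px Py hx hy.
suff H : forall W : nat, forall x y, inP x -> inP y -> A x < A v -> A v < A y ->
  A y - A x <= W%:Z ->
  (B v - B y) * (A v - A x) <= (B x - B v) * (A y - A v).
  by apply: (H `|A y - A x|%N) => //; lia.
elim=> [|W IH] {}x {}y {}Px {}Py {}hx {}hy hW; first lia.
case: (lerP ((B v - B y) * (A v - A x)) ((B x - B v) * (A y - A v))) => // hc.
exfalso.
have hbx := Pareto_left Pv Px hx.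
have Pz : inP (zz x y v).
  move: Px Py; rewrite /inP A_zz B_zz => /andP[p1 p2] /andP[p3 p4].
  apply/andP; split; lia.
have hPv := Pv.2 _ Pz.
case: (ltgtP (A (zz x y v)) (A v)) => hz.
- case: (lerP (B (zz x y v)) (B v)) => hbz.
    have e := hPv (ltW hz) hbz; rewrite e in hz; lia.
  have := IH (zz x y v) y Pz Py hz hy.
  rewrite A_zz B_zz in hz hbz *.
  have -> : A y - (A x + A y - A v) = A v - A x by ring.
  move=> /(_ (ltac:(lia))); nia.
- case: (ltrP (B (zz x y v)) (B v)) => hbz.
    have := IH x (zz x y v) Px Pz hx hz.
    rewrite A_zz B_zz in hz hbz *.
    move=> /(_ (ltac:(lia))); nia.
  rewrite A_zz B_zz in hz hbz; nia.
- have hbz : B (zz x y v) < B v.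
    rewrite A_zz B_zz in hz *; nia.
  have e := hPv (eq_ler hz) (ltW hbz); rewrite e in hbz; lia.
Qed.

Lemma dominate m : inP m -> exists v, Pareto v /\ A v <= A m /\ B v <= B m.
Proof.
move=> Pm.
have [x [[Px [h1 h2]] Hmin]] := @min_exists
  (fun x => inP x /\ A x <= A m /\ B x <= B m) (fun x => A x + B x) (- a0 - a1)
  (fun x H => ltac:(move: (proj1 H); rewrite /inP => /andP[? ?]; lia))
  (ex_intro _ m (conj Pm (conj (lexx _) (lexx _)))).
exists x; split=> //; split=> // y Py hy1 hy2.
have := Hmin y (conj Py (conj (le_trans hy1 h1) (le_trans hy2 h2))) => h.
apply: eqAB; lia.
Qed.


Lemma Pareto_eqA v w : Pareto v -> Pareto w -> A v = A w -> v = w.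
Proof.
move=> [Pv Hv] [Pw Hw] e.
case: (lerP (B v) (B w)) => h.
  by apply: Hw => //; rewrite e.
by apply/esym; apply: Hv => //; [rewrite e|apply: ltW].
Qed.

Lemma Pareto_lin v : Pareto v -> exists a b : int, 0 < a /\ 0 < b /\
  forall x, inP x -> a * A v + b * B v <= a * A x + b * B x.
Proof.
move=> Pv; have [PPv Hv] := Pv.
case: (classic (exists y, inP y /\ A v < A y /\ B y < B v)) => [[y [Py [hy1 hy2]]]|Hn].
- (* choose the nearest Pareto point to the right *)
  have [y' [Py' [hy'1 hy'2]]] := dominate Py.
  have hy'A : A v < A y'.
    case: (ltrP (A v) (A y')) => // h.
    have e := Hv _ Py'.1 h (le_trans hy'2 (ltW hy2)); subst; lia.
  have [w [[Pw hw] Hmin]] := @min_exists (fun w => Pareto w /\ A v < A w) A (A v)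
    (fun x H => ltW (proj2 H)) (ex_intro _ y' (conj Py' hy'A)).
  have hwB : B w < B v.
    case: (ltrP (B w) (B v)) => // h.
    have e := Pw.2 _ PPv (ltW hw) h; subst; lia.
  exists (B v - B w), (A w - A v); split; first lia; split; first lia.
  move=> x Px.
  case: (ltgtP (A x) (A v)) => hxv.
  + have := SL Pv Px Pw.1 hxv hw; nia.
  + case: (ltgtP (A x) (A w)) => hxw.
    * case: (lerP (B v) (B x)) => hb; first nia.
      have [x' [Px' [hx'1 hx'2]]] := dominate Px.
      have hx'A : A v < A x'.
        case: (ltrP (A v) (A x')) => // h.
        have e := Hv _ Px'.1 h (le_trans hx'2 (ltW hb)); subst; lia.
      have := Hmin x' (conj Px' hx'A); lia.
    * have := SL Pw PPv Px hw hxw; nia.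
    * have hb : B w <= B x.
        case: (lerP (B w) (B x)) => // h.
        have e := Pw.2 _ Px (eq_ler hxw) (ltW h); subst; lia.
      nia.
  + have hb : B v <= B x.
      case: (lerP (B v) (B x)) => // h.
      have e := Hv _ Px (eq_ler hxv) (ltW h); subst; lia.
    nia.
- exists 1, (A v + a0 + 1); split; first lia; split.
    move: PPv; rewrite /inP => /andP[? ?]; lia.
  move=> x Px.
  have hv : - a0 <= A v by move: PPv; rewrite /inP => /andP[? ?].
  have hx : - a0 <= A x by move: Px; rewrite /inP => /andP[? ?].
  case: (ltgtP (A x) (A v)) => hxv.
  + have := Pareto_left Pv Px hxv; nia.
  + have hb : B v <= B x.
      case: (lerP (B v) (B x)) => // h.
      by exfalso; apply: Hn; exists x.
    nia.
  + have hb : B v <= B x.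
      case: (lerP (B v) (B x)) => // h.
      have e := Hv _ Px (eq_ler hxv) (ltW h); subst; lia.
    nia.
Qed.

End Geo.

Lemma dot0 u : dot u rho0 = A u.
Proof. by rewrite /dot /A /= mulr1 mulr0 addr0. Qed.
Lemma dot1 n q u : dot u (rho1 n q) = B n q u.
Proof. rewrite /dot /B /=; ring. Qed.
Lemma inPD_P n q a0 a1 u : in_PD n q a0 a1 u = inP n q a0 a1 u.
Proof. by rewrite /in_PD /inP dot0 dot1. Qed.
Lemma sig_sub n q m w :
  in_sigma_dual n q (subM m w) = (A w <= A m) && (B n q w <= B n q m).
Proof.
rewrite /in_sigma_dual dot0 dot1.
have -> : A (subM m w) = A m - A w by [].
have -> : B n q (subM m w) = B n q m - B n q w by rewrite /B /subM /=; ring.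
by rewrite !subr_ge0.
Qed.

Lemma inG_Pareto n q a0 a1 v : (0 < n)%N -> in_G n q a0 a1 v -> Pareto n q a0 a1 v.
Proof.
move=> hn [Pv [a [b [ha [hb H]]]]]; rewrite inPD_P in Pv; split=> // x Px h1 h2.
have := H x; rewrite inPD_P Px !dot0 !dot1 => /(_ isT) Hx.
rewrite -(ler_int rat) in h1; rewrite -(ler_int rat) in h2.
apply: (eqAB (q:=q) hn).
- case: (ltgtP (A x) (A v)) => // hl; first last.
    by move: h1; rewrite ler_int leNgt hl.
  rewrite -(ltr_int rat) in hl.
  have e1 : a * (A x)%:~R < a * (A v)%:~R by rewrite ltr_pM2l.
  have e2 : b * (B n q x)%:~R <= b * (B n q v)%:~R by rewrite ler_pM2l.
  exfalso; lra.
- case: (ltgtP (B n q x) (B n q v)) => // hl; first last.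
    by move: h2; rewrite ler_int leNgt hl.
  rewrite -(ltr_int rat) in hl.
  have e1 : a * (A x)%:~R <= a * (A v)%:~R by rewrite ler_pM2l.
  have e2 : b * (B n q x)%:~R < b * (B n q v)%:~R by rewrite ltr_pM2l.
  exfalso; lra.
Qed.

Lemma Pareto_inG n q a0 a1 v : (0 < n)%N -> Pareto n q a0 a1 v -> in_G n q a0 a1 v.
Proof.
move=> hn Pv; have [a [b [ha [hb H]]]] := Pareto_lin hn Pv.
split; first by rewrite inPD_P; case: Pv.
exists a%:~R, b%:~R; rewrite !ltr0z; split=> //; split=> // x.
rewrite inPD_P !dot0 !dot1 => Px.
by rewrite -!intrM -!intrD ler_int; apply: H.
Qed.

Lemma subMK m w : subM (subM m (subM (0,0) w)) w = m.
Proof. case: m w => [? ?] [? ?]; rewrite /subM /=; congr pair; ring. Qed.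
Lemma subMK' m w : subM (subM m w) (subM (0,0) w) = m.
Proof. case: m w => [? ?] [? ?]; rewrite /subM /=; congr pair; ring. Qed.
Lemma addMsubK m w : addM (subM m w) w = m.
Proof. case: m w => [? ?] [? ?]; rewrite /subM /addM /=; congr pair; ring. Qed.
Lemma subMaddK m w : subM (addM m w) w = m.
Proof. case: m w => [? ?] [? ?]; rewrite /subM /addM /=; congr pair; ring. Qed.

Section FS.
Variable K : fieldType.
Implicit Types f g : M -> K.

Lemma fs0 : fin_supp (fun _ : M => 0 : K).
Proof. by exists [::] => m; rewrite eqxx. Qed.

Lemma fs_U f1 f2 g : fin_supp f1 -> fin_supp f2 ->
  (forall m, g m != 0 -> f1 m != 0 \/ f2 m != 0) -> fin_supp g.
Proof.
move=> [s1 h1] [s2 h2] H; exists (s1 ++ s2) => m /H [] /[dup] hm.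
  by move/h1; rewrite mem_cat => ->.
by move/h2; rewrite mem_cat => ->; rewrite orbT.
Qed.

Lemma fs_le f g : fin_supp f -> (forall m, g m != 0 -> f m != 0) -> fin_supp g.
Proof. by move=> hf H; apply: (fs_U hf hf) => m /H; left. Qed.

Lemma fs_shift w f : fin_supp f -> fin_supp (shift w f).
Proof.
move=> [s h]; exists (map (addM^~ w) s) => m hm.
by rewrite -(addMsubK m w); apply: map_f; apply: h.
Qed.

Lemma neq0_sub (a b : K) : a - b != 0 -> a != 0 \/ b != 0.
Proof.
case: (eqVneq a 0) => [->|]; last by left.
by rewrite sub0r oppr_eq0; right.
Qed.

Lemma neq0_add (a b : K) : a + b != 0 -> a != 0 \/ b != 0.
Proof.
case: (eqVneq a 0) => [->|]; last by left.
by rewrite add0r; right.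
Qed.

Lemma sum_neq0 (F : nat -> K) a b : \sum_(a <= k < b) F k != 0 ->
  exists k, (a <= k < b)%N /\ F k != 0.
Proof.
move=> H; apply: NNPP => Hn; move: H; rewrite big_nat_cond big1 ?eqxx //.
move=> k /andP[hk _]; apply/eqP; apply: NNPP => hk2.
apply: Hn; exists k; split; [exact: hk | exact/negP].
Qed.

Lemma fs_big k (F : nat -> M -> K) : (forall i, (i < k)%N -> fin_supp (F i)) ->
  fin_supp (fun m => \sum_(i < k) F i m).
Proof.
elim: k => [|k IH] H.
  by apply: (fs_le fs0) => m; rewrite big_ord0 eqxx.
apply: (fs_U (IH (fun i hi => H i (ltnW hi))) (H k (ltnSn k))) => m.
by rewrite big_ord_recr /= => /neq0_add.
Qed.

Lemma fs_opp f : fin_supp f -> fin_supp (fun m => - f m).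
Proof. by move=> hf; apply: (fs_le hf) => m; rewrite oppr_eq0. Qed.
End FS.

Section Main.
Variables (n q : nat) (a0 a1 : int) (r : nat) (u : nat -> M).
Hypothesis HinP : forall i, (i <= r)%N -> inP n q a0 a1 (u i).
Hypothesis HA : forall i k, (i < k)%N -> (k <= r)%N -> A (u i) < A (u k).
Hypothesis HB : forall i k, (i < k)%N -> (k <= r)%N -> B n q (u k) < B n q (u i).
Hypothesis Hcov : forall m, inP n q a0 a1 m ->
  exists i, (i <= r)%N /\ A (u i) <= A m /\ B n q (u i) <= B n q m.

Lemma HAle i k : (i <= k)%N -> (k <= r)%N -> A (u i) <= A (u k).
Proof. rewrite leq_eqVlt => /orP[/eqP->//|h] hk; exact: ltW (HA h hk). Qed.
Lemma HBle i k : (i <= k)%N -> (k <= r)%N -> B n q (u k) <= B n q (u i).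
Proof. rewrite leq_eqVlt => /orP[/eqP->//|h] hk; exact: ltW (HB h hk). Qed.

Lemma iota_wd (f : nat -> M -> C) : in_ideal_sum n q r u f ->
  in_free_sum n q r (iota_map r u f).
Proof.
move=> Hf j hj; split.
- apply: (@fs_U _ (fun m => if (1 <= j <= r)%N then shift (subM (0,0) (u j)) (f j) m else 0)
     (fun m => if (j.+1 <= r)%N then shift (subM (0,0) (u j)) (f j.+1) m else 0)).
  + case hc: (1 <= j <= r)%N; last exact: fs0.
    exact: fs_shift (Hf j hc).1.1.
  + case hc: (j.+1 <= r)%N; last exact: fs0.
    exact: fs_shift (Hf j.+1 (ltac:(by rewrite /= hc))).1.1.
  + by move=> m; rewrite /iota_map => /neq0_sub.
- move=> m; rewrite /iota_map => /neq0_sub [].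
  + case hc: (1 <= j <= r)%N; last by rewrite eqxx.
    by rewrite /shift => /(Hf j hc).2.2; rewrite subMK.
  + case hc: (j.+1 <= r)%N; last by rewrite eqxx.
    by rewrite /shift => /(Hf j.+1 (ltac:(by rewrite /= hc))).1.2; rewrite subMK.
Qed.

Lemma pi_wd (g : nat -> M -> C) : in_free_sum n q r g ->
  in_Gamma n q a0 a1 (pi_map r u g).
Proof.
move=> Hg; split.
- apply: (fs_big (F := fun i => shift (u i) (g i))) => i hi.
  exact: fs_shift (Hg i hi).1.
- move=> m; rewrite /pi_map -(big_mkord xpredT (fun i => shift (u i) (g i) m)).
  move=> /sum_neq0 [k [/andP[_ hk] hne]].
  have := (Hg k hk).2 _ hne; rewrite sig_sub inPD_P => /andP[h1 h2].
  have := HinP hk; rewrite /inP => /andP[h3 h4].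
  apply/andP; split; lia.
Qed.



Lemma iota_inj (f : nat -> M -> C) : in_ideal_sum n q r u f ->
  (forall j m, (j <= r)%N -> iota_map r u f j m = 0) ->
  forall i m, (1 <= i <= r)%N -> f i m = 0.
Proof.
move=> Hf H; elim=> [//|i IH] m /andP[_ hi].
have := H i (subM m (u i)) (ltnW hi); rewrite /iota_map /shift subMK' hi.
case: i IH hi => [|i] IH hi /=.
  by rewrite sub0r => /eqP; rewrite oppr_eq0 => /eqP.
rewrite (ltnW hi) IH ?sub0r; last by rewrite /= ltnW.
by move=> /eqP; rewrite oppr_eq0 => /eqP.
Qed.

Lemma sumsplit (F : nat -> C) i : (i <= r.+1)%N ->
  \sum_(k < r.+1) F k = \sum_(k < i) F k + \sum_(i <= k < r.+1) F k.
Proof.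
move=> hi; rewrite -(big_mkord xpredT F) -(big_mkord xpredT F).
by rewrite (@big_cat_nat _ _ _ i 0 r.+1 xpredT F (leq0n i) hi).
Qed.

Lemma exact_fw (g : nat -> M -> C) : in_free_sum n q r g ->
  (forall m, pi_map r u g m = 0) ->
  exists2 f : (nat -> M -> C), in_ideal_sum n q r u f &
    forall j m, (j <= r)%N -> iota_map r u f j m = g j m.
Proof.
move=> Hg Hpi.
pose F k m := shift (u k) (g k) m.
exists (fun i m => - \sum_(k < i) F k m).
- move=> i /andP[hi1 hi2].
  have fsi : fin_supp (fun m => - \sum_(k < i) F k m).
    apply: fs_opp; apply: (fs_big (F := F)) => k hk.
    exact: fs_shift (Hg k (ltnW (leq_trans hk hi2))).1.
  have key : forall m, - \sum_(k < i) F k m != 0 ->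
     A (u i) <= A m /\ B n q (u i.-1) <= B n q m.
    move=> m; rewrite oppr_eq0 => hne.
    have hne2 : \sum_(i <= k < r.+1) F k m != 0.
      have := Hpi m; rewrite /pi_map (sumsplit (fun k => F k m) (leqW hi2)).
      move=> e; apply/negP => /eqP e2; move: e; rewrite e2 addr0 => e.
      by rewrite e eqxx in hne.
    move: hne; rewrite -(big_mkord xpredT (fun k => F k m)) => /sum_neq0 [k [/andP[_ hk] hk2]].
    move: hne2 => /sum_neq0 [k' [/andP[hk'1 hk'2] hk'3]].
    have := (Hg k (ltnW (leq_trans hk hi2))).2 _ hk2; rewrite sig_sub => /andP[e1 e2].
    have := (Hg k' hk'2).2 _ hk'3; rewrite sig_sub => /andP[e3 e4].
    have := HAle hk'1 hk'2; have := HBle (ltac:(lia) : (k <= i.-1)%N) (ltac:(lia) : (i.-1 <= r)%N).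
    move=> *; split; lia.
  split; split=> // m /key [h1 h2]; rewrite sig_sub; apply/andP; split.
  + have := HA (ltac:(lia) : (i.-1 < i)%N) hi2; lia.
  + done.
  + done.
  + have := HBle (ltac:(lia) : (i.-1 <= i)%N) hi2; lia.
- move=> j m hj; rewrite /iota_map /shift.
  set m' := subM m (subM (0, 0) (u j)).
  have -> : (if (1 <= j <= r)%N then - \sum_(k < j) F k m' else 0) = - \sum_(k < j) F k m'.
    case: ifP => [//|hc].
    have j0 : j = 0%N by move: hc; rewrite hj andbT; lia.
    rewrite big1 ?oppr0 // => -[k hk] _; exfalso; lia.
  have -> : (if (j.+1 <= r)%N then - \sum_(k < j.+1) F k m' else 0) = - \sum_(k < j.+1) F k m'.
    case: ifP => // hj2.
    have -> : j = r by apply/eqP; rewrite eqn_leq hj leqNgt; apply/negbT.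
    by have := Hpi m'; rewrite /pi_map => ->; rewrite oppr0.
  rewrite big_ord_recr /=.
  have -> : forall a b : C, - a - - (a + b) = b by move=> a b; ring.
  by rewrite /F /shift /m' subMK.
Qed.

Lemma exact_bw (g : nat -> M -> C) (f : nat -> M -> C) :
  in_ideal_sum n q r u f ->
  (forall j m, (j <= r)%N -> iota_map r u f j m = g j m) ->
  forall m, pi_map r u g m = 0.
Proof.
move=> Hf Hfg m; rewrite /pi_map.
pose h j := if (1 <= j <= r)%N then f j m else 0.
transitivity (\sum_(j < r.+1) - (h j.+1 - h j)).
  apply: eq_bigr => j _; rewrite /shift -Hfg; last by rewrite -ltnS.
  rewrite /iota_map /shift subMK' /h opprB /=.
  by [].
rewrite sumrN -(big_mkord xpredT (fun j => h j.+1 - h j)) telescope_sumr //.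
by rewrite /h /= ltnn subr0 oppr0.
Qed.

Definition idx (m : M) : nat :=
  find (fun i => in_sigma_dual n q (subM m (u i))) (iota 0 r.+1).

Lemma idx_spec m : (idx m < r.+1)%N -> in_sigma_dual n q (subM m (u (idx m))).
Proof.
move=> h; have hs : has (fun i => in_sigma_dual n q (subM m (u i))) (iota 0 r.+1).
  by rewrite has_find size_iota.
by have := nth_find 0%N hs; rewrite nth_iota ?size_iota.
Qed.

Lemma idx_none m : (r.+1 <= idx m)%N -> forall i, (i <= r)%N ->
  ~~ in_sigma_dual n q (subM m (u i)).
Proof.
move=> h i hi; apply/negP => hsig.
have hs : has (fun i => in_sigma_dual n q (subM m (u i))) (iota 0 r.+1).
  by apply/hasP; exists i => //; rewrite mem_iota.
by move: hs; rewrite has_find size_iota ltnNge -/(idx m) h.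
Qed.

Lemma pi_surj (h : M -> C) : in_Gamma n q a0 a1 h ->
  exists2 g : (nat -> M -> C), in_free_sum n q r g &
    forall m, pi_map r u g m = h m.
Proof.
move=> [[s hs] hsupp].
exists (fun i w => if idx (addM w (u i)) == i then h (addM w (u i)) else 0).
- move=> i hi; split.
  + exists (map (subM^~ (u i)) s) => w; case: ifP => _; last by rewrite eqxx.
    by move/hs => hin; rewrite -(subMaddK w (u i)); apply: map_f.
  + move=> w; case: ifP => [/eqP hid _|_]; last by rewrite eqxx.
    have := idx_spec (m := addM w (u i)); rewrite hid ltnS => /(_ hi).
    by rewrite subMaddK.
- move=> m; rewrite /pi_map /shift.
  under eq_bigr do rewrite addMsubK.
  rewrite -big_mkcond /=.
  under eq_bigl do rewrite eq_sym.
  rewrite (big_ord1_eq _ (fun _ => h m)); case: ifP => // hge.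
  case: (eqVneq (h m) 0) => [-> // | hne]; exfalso.
  have Pm := hsupp m hne.
  rewrite inPD_P in Pm.
  have [i [hi [h1 h2]]] := Hcov Pm.
  have := idx_none (m := m) (ltac:(by rewrite leqNgt hge)) hi.
  by rewrite sig_sub h1 h2.
Qed.

Lemma divisorial i : (1 <= i <= r)%N ->
  exists b0 b1 : int, forall f : M -> C,
    (in_principal n q (u i.-1) f /\ in_principal n q (u i) f)
    <-> in_Gamma n q b0 b1 f.
Proof.
move=> /andP[hi1 hi2].
have e1 := HA (ltac:(lia) : (i.-1 < i)%N) hi2.
have e2 := HBle (ltac:(lia) : (i.-1 <= i)%N) hi2.
exists (- A (u i)), (- B n q (u i.-1)) => f; split.
- move=> [[fs s1] [_ s2]]; split=> // m hm.
  move: (s1 m hm) (s2 m hm); rewrite !sig_sub inPD_P /inP => /andP[? ?] /andP[? ?].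
  apply/andP; split; lia.
- move=> [fs s]; split; split=> // m hm; move: (s m hm);
  rewrite inPD_P /inP sig_sub => /andP[? ?]; apply/andP; split; lia.
Qed.
End Main.

Theorem mainTheorem3 (n q : nat) (a0 a1 : int) (r : nat) (u : nat -> M) :
  (0 < q)%N -> (q < n)%N -> coprime q n ->
  (* u^0, ..., u^r are exactly the elements of G(D) ... *)
  (forall m : M, in_G n q a0 a1 m <-> exists2 i, (i <= r)%N & u i = m) ->
  (* ... ordered by strictly increasing <u^i, rho^0> *)
  (forall i, (i < r)%N -> dot (u i) rho0 < dot (u i.+1) rho0) ->
  [/\ (* iota and pi are well-defined maps *)
      ((forall f : nat -> M -> C, in_ideal_sum n q r u f ->
         in_free_sum n q r (iota_map r u f)) /\
      (forall g : nat -> M -> C, in_free_sum n q r g ->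
         in_Gamma n q a0 a1 (pi_map r u g))),
      (* iota is injective *)
      (forall f : nat -> M -> C, in_ideal_sum n q r u f ->
         (forall j m, (j <= r)%N -> iota_map r u f j m = 0) ->
         forall i m, (1 <= i <= r)%N -> f i m = 0),
      (* exactness in the middle: ker pi = im iota *)
      (forall g : nat -> M -> C, in_free_sum n q r g ->
         ((forall m, pi_map r u g m = 0) <->
          exists2 f : (nat -> M -> C), in_ideal_sum n q r u f &
            forall j m, (j <= r)%N -> iota_map r u f j m = g j m)),
      (* pi is surjective *)
      (forall h : M -> C, in_Gamma n q a0 a1 h ->
         exists2 g : (nat -> M -> C), in_free_sum n q r g &
           forall m, pi_map r u g m = h m)
    & (* each (x^{u^{i-1}}) \cap (x^{u^i}) is divisorial *)
      (forall i, (1 <= i <= r)%N ->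
         exists b0 b1 : int, forall f : M -> C,
           (in_principal n q (u i.-1) f /\ in_principal n q (u i) f)
           <-> in_Gamma n q b0 b1 f)].
Proof.
move=> hq hqn _ HG Hord.
have hn : (0 < n)%N by apply: leq_ltn_trans hqn.
have HinG i : (i <= r)%N -> in_G n q a0 a1 (u i).
  by move=> hi; apply/HG; exists i.
have HPar i : (i <= r)%N -> Pareto n q a0 a1 (u i).
  by move=> hi; apply: inG_Pareto hn (HinG i hi).
have HinP i : (i <= r)%N -> inP n q a0 a1 (u i) by move=> hi; case: (HPar i hi).
have HA i k : (i < k)%N -> (k <= r)%N -> A (u i) < A (u k).
  elim: k => [//|k IH] hik hk.
  have := Hord k hk; rewrite !dot0 => h.
  move: hik; rewrite ltnS leq_eqVlt => /orP[/eqP -> //|hik].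
  exact: lt_trans (IH hik (ltnW hk)) h.
have HB i k : (i < k)%N -> (k <= r)%N -> B n q (u k) < B n q (u i).
  move=> hik hk; case: (ltrP (B n q (u k)) (B n q (u i))) => // h; exfalso.
  have hi : (i <= r)%N by apply: ltnW (leq_trans hik hk).
  have e := (HPar k hk).2 _ (HinP i hi) (ltW (HA i k hik hk)) h.
  by have := HA i k hik hk; rewrite e ltxx.
have Hcov m : inP n q a0 a1 m ->
    exists i, (i <= r)%N /\ A (u i) <= A m /\ B n q (u i) <= B n q m.
  move=> Pm; have [v [Pv [h1 h2]]] := dominate hn Pm.
  have /HG [i hi e] := Pareto_inG hn Pv.
  by exists i; subst.
split.
- split=> ?; [exact: iota_wd | exact: (pi_wd HinP)].
- exact: iota_inj.
- move=> g Hg; split.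
  + exact: (exact_fw HA HB).
  + by move=> [f Hf Hfg]; apply: exact_bw Hf Hfg.
- exact: (pi_surj Hcov).
- exact: (divisorial HA HB).
Qed.
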